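(* Let $\Omega_x,\Omega_y\subset\mathbb{R}$ be bounded domains, $\Omega=\Omega_x\times\Omega_y$, $f\in L^2(\Omega)$, and $g\in H^1_0(\Omega)$ the solution of $-\Delta g=f$ in $\Omega$, $g=0$ on $\partial\Omega$. Consider the Pure Greedy Algorithm described in the context and let $n\ge1$. Then the minimizer $(r_n,s_n)$ at iteration $n$ satisfies, for all $(r,s)\in H^1_0(\Omega_x)\times H^1_0(\Omega_y)$, $$\frac12\int_\Omega|\nabla(r\otimes s_n+r_n\otimes s)|^2+\int_\Omega\nabla(r_n\otimes s_n)\cdot\nabla(r\otimes s)-\int_\Omega f_{n-1}\,r\otimes s\ge0,$$ and this condition is equivalent to: for all $(r,s)\in H^1_0(\Omega_x)\times H^1_0(\Omega_y)$, $$\Big(\int_\Omega\nabla(r_n\otimes s_n-g_n)\cdot\nabla(r\otimes s)\Big)^2\le\int_\Omega|\nabla(r\otimes s_n)|^2\int_\Omega|\nabla(r_n\otimes s)|^2.$$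
   Context: Notation: $(r\otimes s)(x,y)=r(x)s(y)$. For $h\in H^{-1}(\Omega)$, $\int_\Omega h\,u$ denotes the duality pairing with $u\in H^1_0(\Omega)$. Pure Greedy Algorithm: $f_0=f$; at iteration $n\ge1$, $(r_n,s_n)$ is a minimizer over $H^1_0(\Omega_x)\times H^1_0(\Omega_y)$ of $(r,s)\mapsto\frac12\int_\Omega|\nabla(r\otimes s)|^2-\int_\Omega f_{n-1}\,r\otimes s$, and $f_n=f_{n-1}+\Delta(r_n\otimes s_n)$. Set $g_n=g-\sum_{k=1}^n r_k\otimes s_k$. *)

(* Defs.v *)
From HB Require Import structures.
From mathcomp Require Import all_boot all_order all_algebra.
From mathcomp Require Import all_classical all_reals all_analysis.
Set Implicit Arguments. Unset Strict Implicit. Unset Printing Implicit Defensive.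
Import Order.TTheory GRing.Theory Num.Theory.
Import numFieldNormedType.Exports.
Local Open Scope classical_set_scope.
Local Open Scope ring_scope.

Section Greedy.
Variable R : realType.

Definition leb := (@lebesgue_measure R).
Definition leb2 := (leb \x leb)%E.

Definition Om (a b c d : R) : set (R * R) := `]a, b[ `*` `]c, d[.

Definition I1 (a b : R) (u : R -> R) : R :=
  fine (\int[leb]_(x in `]a, b[) (u x)%:E)%E.
Definition I2 (a b c d : R) (u : R * R -> R) : R :=
  fine (\int[leb2]_(p in Om a b c d) (u p)%:E)%E.

Definition L2_1 (a b : R) (u : R -> R) : Prop :=
  measurable_fun `]a, b[ u /\
  leb.-integrable `]a, b[ (fun x => (u x ^+ 2)%:E).
Definition L2_2 (a b c d : R) (u : R * R -> R) : Prop :=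
  measurable_fun (Om a b c d) u /\
  leb2.-integrable (Om a b c d) (fun p => (u p ^+ 2)%:E).

Definition test1 (a b : R) (phi : R -> R) : Prop :=
  (forall x, derivable phi x 1) /\ continuous phi /\ continuous (derive1 phi) /\
  exists2 e : R, 0 < e & forall x, ~ (a + e <= x <= b - e) -> phi x = 0.

Definition dx (phi : R * R -> R) : R * R -> R :=
  fun p => derive1 (fun t => phi (t, p.2)) p.1.
Definition dy (phi : R * R -> R) : R * R -> R :=
  fun p => derive1 (fun t => phi (p.1, t)) p.2.

Definition test2 (a b c d : R) (phi : R * R -> R) : Prop :=
  (forall p, derivable (fun t => phi (t, p.2)) p.1 1) /\
  (forall p, derivable (fun t => phi (p.1, t)) p.2 1) /\
  continuous phi /\ continuous (dx phi) /\ continuous (dy phi) /\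
  exists2 e : R, 0 < e & forall p,
    ~ ((a + e <= p.1 <= b - e) /\ (c + e <= p.2 <= d - e)) -> phi p = 0.

(* H^1_0(]a,b[): u in L^2 with (weak) derivative du in L^2, obtained as an
   H^1-limit of compactly supported C^1 functions (closure definition). *)
Definition H10_1 (a b : R) (u du : R -> R) : Prop :=
  L2_1 a b u /\ L2_1 a b du /\
  exists phi : nat -> R -> R, (forall k, test1 a b (phi k)) /\
    ((fun k => \int[leb]_(x in `]a, b[) ((phi k x - u x) ^+ 2)%:E)%E
       @ \oo --> 0%E) /\
    ((fun k => \int[leb]_(x in `]a, b[) ((derive1 (phi k) x - du x) ^+ 2)%:E)%E
       @ \oo --> 0%E).

Definition grad := ((R * R -> R) * (R * R -> R))%type.

(* H^1_0(Omega): u with weak gradient G, H^1-limit of test functions. *)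
Definition H10_2 (a b c d : R) (u : R * R -> R) (G : grad) : Prop :=
  L2_2 a b c d u /\ L2_2 a b c d G.1 /\ L2_2 a b c d G.2 /\
  exists phi : nat -> R * R -> R, (forall k, test2 a b c d (phi k)) /\
    ((fun k => \int[leb2]_(p in Om a b c d) ((phi k p - u p) ^+ 2)%:E)%E
       @ \oo --> 0%E) /\
    ((fun k => \int[leb2]_(p in Om a b c d) ((dx (phi k) p - G.1 p) ^+ 2)%:E)%E
       @ \oo --> 0%E) /\
    ((fun k => \int[leb2]_(p in Om a b c d) ((dy (phi k) p - G.2 p) ^+ 2)%:E)%E
       @ \oo --> 0%E).

Definition tens (r s : R -> R) : R * R -> R := fun p => r p.1 * s p.2.
Definition gtens (r dr s ds : R -> R) : grad := (tens dr s, tens r ds).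

Definition gadd (G H : grad) : grad := (G.1 \+ H.1, G.2 \+ H.2).
Definition gsub (G H : grad) : grad := (G.1 \- H.1, G.2 \- H.2).

Definition dirichlet (a b c d : R) (G H : grad) : R :=
  I2 a b c d (fun p => G.1 p * H.1 p + G.2 p * H.2 p).
Definition dnorm2 (a b c d : R) (G : grad) : R := dirichlet a b c d G G.

(* The iterates: r k, s k with derivatives dr k, ds k (k >= 1). *)
(* Duality pairing <f_n, v> for v in H^1_0(Omega) with gradient Gv, where
   f_0 = f and f_n = f_{n-1} + Delta(r_n (x) s_n), i.e.
   <Delta w, v> = - int grad w . grad v. *)
Definition fpair (a b c d : R) (f : R * R -> R) (r dr s ds : nat -> R -> R)
  (n : nat) (v : R * R -> R) (Gv : grad) : R :=
  I2 a b c d (fun p => f p * v p)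
  - \sum_(1 <= k < n.+1) dirichlet a b c d (gtens (r k) (dr k) (s k) (ds k)) Gv.

Definition grad_gn (G : grad) (r dr s ds : nat -> R -> R) (n : nat) : grad :=
  (fun p => G.1 p - \sum_(1 <= k < n.+1) (gtens (r k) (dr k) (s k) (ds k)).1 p,
   fun p => G.2 p - \sum_(1 <= k < n.+1) (gtens (r k) (dr k) (s k) (ds k)).2 p).

(* functional minimized at iteration n:
   J_n(r,s) = 1/2 int |grad (r (x) s)|^2 - <f_{n-1}, r (x) s> *)
Definition Jn (a b c d : R) (f : R * R -> R) (rr drr ss dss : nat -> R -> R)
  (n : nat) (r dr s ds : R -> R) : R :=
  2^-1 * dnorm2 a b c d (gtens r dr s ds)
  - fpair a b c d f rr drr ss dss n.-1 (tens r s) (gtens r dr s ds).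

End Greedy.

(* Main.v *)
Require Import Defs.
From HB Require Import structures.
From mathcomp Require Import all_boot all_order all_algebra.
From mathcomp Require Import all_classical all_reals all_analysis.
From mathcomp Require Import lra ring.
Import Order.TTheory GRing.Theory Num.Theory.
Import numFieldNormedType.Exports.
Set Implicit Arguments. Unset Strict Implicit. Unset Printing Implicit Defensive.
Import measurable_realfun.
Local Open Scope classical_set_scope.
Local Open Scope ring_scope.

Section Gen.
Variables (d : measure_display) (T : measurableType d) (R : realType).
Variables (mu : measure T R) (D : set T).
Hypothesis mD : measurable D.

Definition L2 (F : T -> R) := measurable_fun D F /\ mu.-integrable D (fun x => (F x ^+ 2)%:E).

Lemma L2_prod F H : L2 F -> L2 H -> mu.-integrable D (fun x => (F x * H x)%:E).
Proof.
move=> [mF iF] [mH iH].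
apply: (le_integrable mD _ _ (integrableD mD iF iH)).
  by apply/measurable_EFinP; exact: measurable_funM.
move=> x _ /=; rewrite lee_fin [X in _ <= X]ger0_norm ?addr_ge0 ?sqr_ge0 //.
have h1 := sqr_ge0 (F x - H x); have h2 := sqr_ge0 (F x + H x).
rewrite ler_norml; apply/andP; split; nra.
Qed.

Lemma L2_add F H : L2 F -> L2 H -> L2 (F \+ H).
Proof.
move=> [mF iF] [mH iH]; split; first exact: measurable_funD.
have i2 := integrableD mD (integrableZl mD 2 iF) (integrableZl mD 2 iH).
apply: (le_integrable mD _ _ i2).
  by apply/measurable_EFinP; apply: measurable_funX; exact: measurable_funD.
move=> x _ /=; rewrite lee_fin !ger0_norm ?sqr_ge0 //; last first.
  by rewrite addr_ge0 // mulr_ge0 // sqr_ge0.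
have := sqr_ge0 (F x - H x); rewrite sqrrB sqrrD; nra.
Qed.

Lemma L2_scale k F : L2 F -> L2 (fun x => k * F x).
Proof.
move=> [mF iF]; split; first exact: measurable_funM.
have := integrableZl mD (k ^+ 2) iF.
by apply: (eq_integrable mD) => x _ /=; rewrite -EFinM exprMn.
Qed.
Lemma cvg_L2_lin (Fk Gk : nat -> T -> R) (F G : T -> R) (al be : R) :
  (forall k, measurable_fun D (Fk k)) -> (forall k, measurable_fun D (Gk k)) ->
  measurable_fun D F -> measurable_fun D G ->
  ((fun k => \int[mu]_(x in D) ((Fk k x - F x) ^+ 2)%:E)%E @ \oo --> 0%E) ->
  ((fun k => \int[mu]_(x in D) ((Gk k x - G x) ^+ 2)%:E)%E @ \oo --> 0%E) ->
  ((fun k => \int[mu]_(x in D)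
      (((al * Fk k x + be * Gk k x) - (al * F x + be * G x)) ^+ 2)%:E)%E @ \oo --> 0%E).
Proof.
move=> mFk mGk mF mG cF cG.
have f1 : ((2 * al ^+ 2)%:E : \bar R) \is a fin_num by [].
have f2 : ((2 * be ^+ 2)%:E : \bar R) \is a fin_num by [].
have hA := cvgeZl f1 cF.
have hB := cvgeZl f2 cG.
rewrite mule0 in hA; rewrite mule0 in hB.
have hAB := @cvgeD _ _ _ _ _ _ 0%E 0%E isT hA hB.
rewrite adde0 in hAB.
eapply (@squeeze_cvge _ _ _ _ (fun=> 0%E)); [|exact: cvg_cst|exact: hAB].
near=> k; apply/andP; split.
  by apply: integral_ge0 => x _; rewrite lee_fin sqr_ge0.
have mX : forall (H : T -> R), measurable_fun D H -> measurable_fun D (fun x => (H x ^+ 2)%:E).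
  by move=> H mH; apply/measurable_EFinP; exact: measurable_funX.
rewrite -(ge0_integralZl _ mD) //; last 3 first.
- by apply: mX; apply: measurable_funB.
- by move=> x _; rewrite lee_fin sqr_ge0.
- by rewrite lee_fin mulr_ge0 // sqr_ge0.
rewrite -(ge0_integralZl _ mD) //; last 3 first.
- by apply: mX; apply: measurable_funB.
- by move=> x _; rewrite lee_fin sqr_ge0.
- by rewrite lee_fin mulr_ge0 // sqr_ge0.
rewrite -ge0_integralD //; last 4 first.
- by move=> x _; rewrite -EFinM lee_fin mulr_ge0 // ?sqr_ge0 // mulr_ge0 // sqr_ge0.
- apply: emeasurable_funM; first exact: measurable_cst.
  by apply: mX; apply: measurable_funB.
- by move=> x _; rewrite -EFinM lee_fin mulr_ge0 // ?sqr_ge0 // mulr_ge0 // sqr_ge0.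
- apply: emeasurable_funM; first exact: measurable_cst.
  by apply: mX; apply: measurable_funB.
apply: ge0_le_integral => //.
- by move=> x _; rewrite lee_fin sqr_ge0.
- apply: mX; apply: measurable_funB; apply: measurable_funD; apply: measurable_funM => //;
    exact: measurable_cst.
- apply: emeasurable_funD; (apply: emeasurable_funM; first exact: measurable_cst);
    by apply: mX; apply: measurable_funB.
move=> x _; rewrite -!EFinM -EFinD lee_fin.
have := sqr_ge0 (al * (Fk k x - F x) - be * (Gk k x - G x)).
nra.
Unshelve. all: by end_near.
Qed.
End Gen.
Section S.
Variable R : realType.
Implicit Types a b c d : R.
Lemma mOm a b c d : measurable (Om a b c d).
Proof. apply: measurableX => //. Qed.
Lemma tonelli_tens a b c d (u v : R -> R) :
  measurable_fun `]a, b[ u -> measurable_fun `]c, d[ v ->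
  (forall x, 0 <= u x) -> (forall y, 0 <= v y) ->
  (\int[@leb2 R]_(p in Om a b c d) (u p.1 * v p.2)%:E =
   \int[@leb R]_(x in `]a, b[) (u x)%:E * \int[@leb R]_(y in `]c, d[) (v y)%:E)%E.
Proof.
move=> mu mv u0 v0.
rewrite integral_mkcond.
set U := u \_ `]a, b[. set V := v \_ `]c, d[.
have -> : ((fun p : R * R => (u p.1 * v p.2)%:E) \_ (Om a b c d)) =
          (fun p => (U p.1 * V p.2)%:E).
  apply/funext => p; rewrite /U /V !patchE /Om in_setX.
  by case: (p.1 \in _); case: (p.2 \in _) => //=; rewrite ?mulr0 ?mul0r.
have mU : measurable_fun setT U.
  by apply/(measurable_restrict u (measurable_itv _) measurableT); rewrite setTI.
have mV : measurable_fun setT V.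
  by apply/(measurable_restrict v (measurable_itv _) measurableT); rewrite setTI.
rewrite /leb2 fubini_tonelli1 /=; last 2 first.
- apply/measurable_EFinP; apply: measurable_funM.
  + exact: measurableT_comp.
  + exact: measurableT_comp.
- by move=> p; rewrite lee_fin /U /V !patchE; case: ifP; case: ifP => //= *; rewrite ?mulr0 ?mul0r ?mulr_ge0.
rewrite /fubini_F /=.
have U0 x : 0 <= U x by rewrite /U patchE; case: ifP.
have V0 x : 0 <= V x by rewrite /V patchE; case: ifP.
under eq_integral => x _.
  under eq_integral => y _ do rewrite EFinM.
  rewrite (ge0_integralZl _ measurableT) //; last 3 first.
  - exact/measurable_EFinP.
  - by move=> y _; rewrite lee_fin.
  - by rewrite lee_fin.
  over.
rewrite /= (ge0_integralZr _ measurableT) //; last 3 first.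
- exact/measurable_EFinP.
- by move=> y _; rewrite lee_fin.
- by apply: integral_ge0 => y _; rewrite lee_fin.
rewrite /leb [X in _ = (X * _)%E]integral_mkcond [X in _ = (_ * X)%E]integral_mkcond.
congr (_ * _)%E; apply: eq_integral => x _; rewrite patchE /U /V patchE;
  by case: ifP.
Qed.

Lemma mtens a b c d (u v : R -> R) :
  measurable_fun `]a, b[ u -> measurable_fun `]c, d[ v ->
  measurable_fun (Om a b c d) (tens u v).
Proof.
move=> mu mv; apply: measurable_funM.
- apply: (measurable_comp (F := `]a, b[)) => //.
  + by move=> _ [p [+ _] <-].
  + exact: measurable_funS measurable_fst.
- apply: (measurable_comp (F := `]c, d[)) => //.
  + by move=> _ [p [_ +] <-].
  + exact: measurable_funS measurable_snd.
Qed.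

Lemma int_tens a b c d (u v : R -> R) :
  measurable_fun `]a, b[ u -> measurable_fun `]c, d[ v ->
  (@leb R).-integrable `]a, b[ (fun x => (u x)%:E) ->
  (@leb R).-integrable `]c, d[ (fun x => (v x)%:E) ->
  (@leb2 R).-integrable (Om a b c d) (fun p => (tens u v p)%:E).
Proof.
move=> mu mv /integrableP[_ iu] /integrableP[_ iv].
apply/integrableP; split. { apply/measurable_EFinP; exact: mtens. }
under eq_integral => p _ do rewrite abse_EFin /tens normrM.
have iu' : (\int[@leb R]_(x in `]a, b[) (`|u x|)%:E < +oo)%E.
  by under eq_integral => x _ do rewrite -abse_EFin.
have iv' : (\int[@leb R]_(x in `]c, d[) (`|v x|)%:E < +oo)%E.
  by under eq_integral => x _ do rewrite -abse_EFin.
have mu' : measurable_fun `]a, b[ (fun x => `|u x|) by exact: measurableT_comp.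
have mv' : measurable_fun `]c, d[ (fun x => `|v x|) by exact: measurableT_comp.
rewrite (tonelli_tens mu' mv') //.
apply: lte_mul_pinfty => //.
  by apply: integral_ge0 => x _; rewrite lee_fin.
by rewrite ge0_fin_numE //; apply: integral_ge0 => x _; rewrite lee_fin.
Qed.

Lemma L2_tens a b c d (u v : R -> R) :
  L2_1 a b u -> L2_1 c d v -> L2_2 a b c d (tens u v).
Proof.
move=> [mu iu] [mv iv]; split; first exact: mtens.
have h := int_tens (measurable_funX 2 mu) (measurable_funX 2 mv) iu iv.
have e := @eq_integrable _ _ _ (@leb2 R) _ (mOm a b c d).
apply: (e _ _ _ h).
by move=> p _; rewrite /tens exprMn.
Qed.

Definition INT a b c d (h : R * R -> R) :=
  (@leb2 R).-integrable (Om a b c d) (fun p => (h p)%:E).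

Lemma L2_2_prod a b c d F H : L2_2 a b c d F -> L2_2 a b c d H ->
  INT a b c d (fun p => F p * H p).
Proof. move=> hF hH; exact: (@L2_prod _ _ _ (@leb2 R) _ (mOm a b c d) F H hF hH). Qed.

Lemma L2_2_add a b c d F H : L2_2 a b c d F -> L2_2 a b c d H ->
  L2_2 a b c d (fun p => F p + H p).
Proof. move=> hF hH; exact: (@L2_add _ _ _ (@leb2 R) _ (mOm a b c d) F H hF hH). Qed.

Lemma L2_2_scale a b c d k F : L2_2 a b c d F -> L2_2 a b c d (fun p => k * F p).
Proof. move=> hF; exact: (@L2_scale _ _ _ (@leb2 R) _ (mOm a b c d) k F hF). Qed.

Lemma INT_add a b c d h1 h2 : INT a b c d h1 -> INT a b c d h2 ->
  INT a b c d (fun p => h1 p + h2 p).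
Proof. by move=> i1 i2; exact: (@integrableD _ _ _ (@leb2 R) _ (mOm a b c d) _ _ i1 i2). Qed.

Lemma INT_scale a b c d k h : INT a b c d h -> INT a b c d (fun p => k * h p).
Proof. by move=> i; exact: (@integrableZl _ _ _ (@leb2 R) _ (mOm a b c d) k _ i). Qed.

Lemma I2D a b c d h1 h2 : INT a b c d h1 -> INT a b c d h2 ->
  I2 a b c d (fun p => h1 p + h2 p) = I2 a b c d h1 + I2 a b c d h2.
Proof.
move=> i1 i2; rewrite /I2.
under eq_integral => p _ do rewrite EFinD.
rewrite integralD //; last exact: mOm.
by rewrite fineD // integrable_fin_num //; exact: mOm.
Qed.

Lemma I2Z a b c d k h : INT a b c d h ->
  I2 a b c d (fun p => k * h p) = k * I2 a b c d h.
Proof.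
move=> i; rewrite /I2.
under eq_integral => p _ do rewrite EFinM.
rewrite integralZl //; last exact: mOm.
by rewrite fineM // integrable_fin_num //; exact: mOm.
Qed.

Lemma I2_ext a b c d h1 h2 : h1 =1 h2 -> I2 a b c d h1 = I2 a b c d h2.
Proof. by move=> e; rewrite (funext e). Qed.

Lemma INT0 a b c d : INT a b c d (fun=> 0).
Proof. exact: (@integrable0 _ _ _ (@leb2 R)). Qed.

Lemma I20 a b c d : I2 a b c d (fun=> 0) = 0.
Proof. by rewrite /I2 integral0. Qed.

Lemma INT_ext a b c d h1 h2 : h1 =1 h2 -> INT a b c d h1 -> INT a b c d h2.
Proof. by move=> e; rewrite (funext e). Qed.

Lemma INT_sum a b c d (h : nat -> R * R -> R) m n :
  (forall k, (m <= k < n)%N -> INT a b c d (h k)) ->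
  INT a b c d (fun p => \sum_(m <= k < n) h k p).
Proof.
elim: n => [|n IH] hi.
  by apply: (INT_ext _ (INT0 _ _ _ _)) => p; rewrite big_geq.
case: (leqP m n) => hmn.
  apply: (INT_ext (h1 := fun p => \sum_(m <= k < n) h k p + h n p)).
    by move=> p; rewrite big_nat_recr.
  apply: INT_add; last by apply: hi; rewrite hmn ltnSn.
  by apply: IH => k /andP[k1 k2]; apply: hi; rewrite k1 ltnS ltnW.
by apply: (INT_ext _ (INT0 _ _ _ _)) => p; rewrite big_geq.
Qed.

Lemma I2_sum a b c d (h : nat -> R * R -> R) m n :
  (forall k, (m <= k < n)%N -> INT a b c d (h k)) ->
  I2 a b c d (fun p => \sum_(m <= k < n) h k p) = \sum_(m <= k < n) I2 a b c d (h k).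
Proof.
elim: n => [|n IH] hi.
  rewrite [RHS]big_geq // -[RHS](I20 a b c d); apply: I2_ext => p /=.
  by rewrite big_geq.
case: (leqP m n) => hmn.
  have hi' : forall k, (m <= k < n)%N -> INT a b c d (h k).
    by move=> k /andP[k1 k2]; apply: hi; rewrite k1 ltnS ltnW.
  rewrite (@I2_ext a b c d _ (fun p => \sum_(m <= k < n) h k p + h n p)); last first.
    by move=> p; rewrite big_nat_recr.
  rewrite I2D ?big_nat_recr ?IH //; first exact: INT_sum.
  by apply: hi; rewrite hmn ltnSn.
rewrite [RHS]big_geq // -[RHS](I20 a b c d); apply: I2_ext => p /=.
by rewrite big_geq.
Qed.

Definition gscale k (G : grad R) : grad R := (fun p => k * G.1 p, fun p => k * G.2 p).
Definition L2G a b c d (G : grad R) := L2_2 a b c d G.1 /\ L2_2 a b c d G.2.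

Lemma L2G_add a b c d G H : L2G a b c d G -> L2G a b c d H -> L2G a b c d (gadd G H).
Proof. by move=> [? ?] [? ?]; split; apply: L2_2_add. Qed.

Lemma L2G_scale a b c d k G : L2G a b c d G -> L2G a b c d (gscale k G).
Proof. by move=> [? ?]; split; apply: L2_2_scale. Qed.

Lemma L2G_sub a b c d G H : L2G a b c d G -> L2G a b c d H -> L2G a b c d (gsub G H).
Proof.
move=> hG hH; have [h1 h2] := L2G_add hG (L2G_scale (-1) hH).
by split; [apply: (eq_ind _ _ h1)|apply: (eq_ind _ _ h2)]; apply/funext => p /=;
  rewrite mulN1r.
Qed.

Lemma L2G_gtens a b c d r dr s ds : L2_1 a b r -> L2_1 a b dr -> L2_1 c d s -> L2_1 c d ds ->
  L2G a b c d (gtens r dr s ds).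
Proof. by move=> *; split; apply: L2_tens. Qed.

Lemma INT_dir a b c d G K : L2G a b c d G -> L2G a b c d K ->
  INT a b c d (fun p => G.1 p * K.1 p + G.2 p * K.2 p).
Proof. by move=> [? ?] [? ?]; apply: INT_add; apply: L2_2_prod. Qed.

Lemma dir_sym a b c d G H : dirichlet a b c d G H = dirichlet a b c d H G.
Proof. by apply: I2_ext => p; rewrite mulrC [G.2 p * _]mulrC. Qed.

Lemma dir_addl a b c d G H K : L2G a b c d G -> L2G a b c d H -> L2G a b c d K ->
  dirichlet a b c d (gadd G H) K = dirichlet a b c d G K + dirichlet a b c d H K.
Proof.
move=> hG hH hK; rewrite /dirichlet -I2D; try exact: INT_dir.
by apply: I2_ext => p /=; rewrite !mulrDl; ring.
Qed.

Lemma dir_scalel a b c d k G K : L2G a b c d G -> L2G a b c d K ->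
  dirichlet a b c d (gscale k G) K = k * dirichlet a b c d G K.
Proof.
move=> hG hK; rewrite /dirichlet -I2Z; last exact: INT_dir.
by apply: I2_ext => p /=; ring.
Qed.

Lemma dir_addr a b c d G H K : L2G a b c d G -> L2G a b c d H -> L2G a b c d K ->
  dirichlet a b c d K (gadd G H) = dirichlet a b c d K G + dirichlet a b c d K H.
Proof. by move=> *; rewrite dir_sym dir_addl // (dir_sym _ _ _ _ G) (dir_sym _ _ _ _ H). Qed.

Lemma dir_scaler a b c d k G K : L2G a b c d G -> L2G a b c d K ->
  dirichlet a b c d K (gscale k G) = k * dirichlet a b c d K G.
Proof. by move=> *; rewrite dir_sym dir_scalel // dir_sym. Qed.

Lemma dir_subl a b c d G H K : L2G a b c d G -> L2G a b c d H -> L2G a b c d K ->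
  dirichlet a b c d (gsub G H) K = dirichlet a b c d G K - dirichlet a b c d H K.
Proof.
move=> hG hH hK; rewrite /dirichlet -[X in _ - X]mul1r -mulNr -I2Z; last exact: INT_dir.
rewrite -I2D; [|exact: INT_dir|apply: INT_scale; exact: INT_dir].
by apply: I2_ext => p /=; ring.
Qed.

Lemma dnorm2_ge0 a b c d G : 0 <= dnorm2 a b c d G.
Proof.
apply: fine_ge0; apply: integral_ge0 => p _; rewrite lee_fin.
by apply: addr_ge0; rewrite -expr2 sqr_ge0.
Qed.

Hint Resolve L2G_add L2G_scale L2G_sub : core.

Ltac dexp :=
  repeat first
   [ rewrite dir_addl; [|by auto..]
   | rewrite dir_addr; [|by auto..]
   | rewrite dir_scalel; [|by auto..]
   | rewrite dir_scaler; [|by auto..] ].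

Lemma dnorm2_poly a b c d X Y Z t : L2G a b c d X -> L2G a b c d Y -> L2G a b c d Z ->
  dnorm2 a b c d (gadd (gadd X (gscale t Y)) (gscale (t ^+ 2) Z)) =
  dnorm2 a b c d X + 2 * t * dirichlet a b c d X Y
  + t ^+ 2 * (dnorm2 a b c d Y + 2 * dirichlet a b c d X Z)
  + 2 * t ^+ 3 * dirichlet a b c d Y Z + t ^+ 4 * dnorm2 a b c d Z.
Proof.
move=> hX hY hZ; rewrite /dnorm2; dexp.
rewrite (dir_sym _ _ _ _ Y X) (dir_sym _ _ _ _ Z X) (dir_sym _ _ _ _ Z Y).
ring.
Qed.

Lemma fpair_poly a b c d f (rr drr ss dss : nat -> R -> R) m v0 v1 v2 X Y Z t :
  L2_2 a b c d f ->
  (forall k, (1 <= k < m.+1)%N -> L2G a b c d (gtens (rr k) (drr k) (ss k) (dss k))) ->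
  L2_2 a b c d v0 -> L2_2 a b c d v1 -> L2_2 a b c d v2 ->
  L2G a b c d X -> L2G a b c d Y -> L2G a b c d Z ->
  fpair a b c d f rr drr ss dss m (fun p => v0 p + t * v1 p + t ^+ 2 * v2 p)
    (gadd (gadd X (gscale t Y)) (gscale (t ^+ 2) Z)) =
  fpair a b c d f rr drr ss dss m v0 X + t * fpair a b c d f rr drr ss dss m v1 Y
  + t ^+ 2 * fpair a b c d f rr drr ss dss m v2 Z.
Proof.
move=> hf hk h0 h1 h2 hX hY hZ; rewrite /fpair.
have e : forall k, (1 <= k < m.+1)%N ->
  dirichlet a b c d (gtens (rr k) (drr k) (ss k) (dss k))
    (gadd (gadd X (gscale t Y)) (gscale (t ^+ 2) Z)) =
  dirichlet a b c d (gtens (rr k) (drr k) (ss k) (dss k)) X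
  + t * dirichlet a b c d (gtens (rr k) (drr k) (ss k) (dss k)) Y
  + t ^+ 2 * dirichlet a b c d (gtens (rr k) (drr k) (ss k) (dss k)) Z.
  by move=> k /hk hk'; dexp.
rewrite (eq_big_nat _ _ e) !big_split /= -!mulr_sumr.
have i0 := L2_2_prod hf h0; have i1 := L2_2_prod hf h1; have i2 := L2_2_prod hf h2.
rewrite (@I2_ext a b c d _ (fun p => (f p * v0 p + t * (f p * v1 p)) + t ^+ 2 * (f p * v2 p))); last first.
  by move=> p; ring.
rewrite I2D; last (by apply: INT_scale); last by apply: INT_add => //; apply: INT_scale.
rewrite I2D //; last by apply: INT_scale.
rewrite !I2Z //.
ring.
Qed.

Lemma derive1_lin (al be : R) (f g : R -> R) x : derivable f x 1 -> derivable g x 1 ->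
  derivable (fun y => al * f y + be * g y) x 1 /\
  derive1 (fun y => al * f y + be * g y) x = al * derive1 f x + be * derive1 g x.
Proof.
move=> df dg.
have -> : (fun y => al * f y + be * g y) = (al \*: f + be \*: g) by [].
split; first by apply: derivableD; apply: derivableZ.
by rewrite !derive1E deriveD ?deriveZ //; apply: derivableZ.
Qed.
Lemma cont_lin (T : topologicalType) (al be : R) (f g : T -> R) : continuous f -> continuous g ->
  continuous (fun y => al * f y + be * g y).
Proof.
move=> cf cg x.
have -> : (fun y => al * f y + be * g y) = (fun y => al * f y) + (fun y => be * g y) by [].
apply: continuousD.
  exact: (@continuousZ _ _ _ (cst al) f x (cvg_cst _) (cf x)).
exact: (@continuousZ _ _ _ (cst be) g x (cvg_cst _) (cg x)).
Qed.
Lemma test1_lin a b (al be : R) f g : test1 a b f -> test1 a b g ->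
  test1 a b (fun y => al * f y + be * g y).
Proof.
move=> [df [cf [cdf [e1 e10 s1]]]] [dg [cg [cdg [e2 e20 s2]]]].
have dl x := derive1_lin al be (df x) (dg x).
split; first by move=> x; case: (dl x).
split; first exact: cont_lin.
split.
  have -> : derive1 (fun y => al * f y + be * g y) = (fun y => al * derive1 f y + be * derive1 g y).
    by apply/funext => x; case: (dl x).
  exact: cont_lin.
exists (Num.min e1 e2); first by rewrite lt_min e10.
have m1 : Num.min e1 e2 <= e1 by rewrite ge_min lexx.
have m2 : Num.min e1 e2 <= e2 by rewrite ge_min lexx orbT.
move=> x hx; rewrite s1 ?s2 ?mulr0 ?addr0 //.
- move=> /andP[h1 h2]; apply: hx; apply/andP; split; lra.
- move=> /andP[h1 h2]; apply: hx; apply/andP; split; lra.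
Qed.

Lemma mtest1 a b f : test1 a b f -> measurable_fun `]a, b[ f.
Proof. by move=> [_ [cf _]]; apply: measurable_funS (continuous_measurable_fun cf). Qed.

Lemma mtest1' a b f : test1 a b f -> measurable_fun `]a, b[ (derive1 f).
Proof. by move=> [_ [_ [cf _]]]; apply: measurable_funS (continuous_measurable_fun cf). Qed.

Lemma L2_1_lin a b (al be : R) u v : L2_1 a b u -> L2_1 a b v ->
  L2_1 a b (fun x => al * u x + be * v x).
Proof.
move=> hu hv.
exact: (@L2_add _ _ _ (@leb R) _ (measurable_itv _) _ _
  (@L2_scale _ _ _ (@leb R) _ (measurable_itv _) al _ hu)
  (@L2_scale _ _ _ (@leb R) _ (measurable_itv _) be _ hv)).
Qed.

Lemma H10_1_lin a b (al be : R) u du v dv : H10_1 a b u du -> H10_1 a b v dv ->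
  H10_1 a b (fun x => al * u x + be * v x) (fun x => al * du x + be * dv x).
Proof.
move=> [Lu [Ldu [phi [tphi [c1 c2]]]]] [Lv [Ldv [psi [tpsi [c3 c4]]]]].
split; first exact: L2_1_lin.
split; first exact: L2_1_lin.
exists (fun k y => al * phi k y + be * psi k y); split.
  by move=> k; apply: test1_lin.
split.
  apply: (@cvg_L2_lin _ _ _ (@leb R) _ (measurable_itv _)) => //.
  - by move=> k; apply: mtest1.
  - by move=> k; apply: mtest1.
  - by case: Lu.
  - by case: Lv.
have e : forall k, derive1 (fun y => al * phi k y + be * psi k y) =
  (fun y => al * derive1 (phi k) y + be * derive1 (psi k) y).
  move=> k; apply/funext => x.
  by case: (derive1_lin al be ((tphi k).1 x) ((tpsi k).1 x)).
under eq_fun => k do rewrite e.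
apply: (@cvg_L2_lin _ _ _ (@leb R) _ (measurable_itv _)) => //.
- by move=> k; apply: mtest1'.
- by move=> k; apply: mtest1'.
- by case: Ldu.
- by case: Ldv.
Qed.

Lemma cvg_tens a b c d (Fk Gk : nat -> R -> R) (F G : R -> R) :
  (forall k, measurable_fun `]a, b[ (Fk k)) -> (forall k, measurable_fun `]c, d[ (Gk k)) ->
  L2_1 a b F -> L2_1 c d G ->
  ((fun k => \int[@leb R]_(x in `]a, b[) ((Fk k x - F x) ^+ 2)%:E)%E @ \oo --> 0%E) ->
  ((fun k => \int[@leb R]_(x in `]c, d[) ((Gk k x - G x) ^+ 2)%:E)%E @ \oo --> 0%E) ->
  ((fun k => \int[@leb2 R]_(p in Om a b c d)
      ((tens (Fk k) (Gk k) p - tens F G p) ^+ 2)%:E)%E @ \oo --> 0%E).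
Proof.
move=> mFk mGk [mF iF] [mG iG] cF cG.
pose U := (\int[@leb R]_(x in `]a, b[) (F x ^+ 2)%:E)%E.
pose V := (\int[@leb R]_(x in `]c, d[) (G x ^+ 2)%:E)%E.
have fU : U \is a fin_num := @integrable_fin_num _ _ _ (@leb R) _ (measurable_itv _) _ iF.
have fV : V \is a fin_num := @integrable_fin_num _ _ _ (@leb R) _ (measurable_itv _) _ iG.
pose A := fun k => (\int[@leb R]_(x in `]a, b[) ((Fk k x - F x) ^+ 2)%:E)%E.
pose B := fun k => (\int[@leb R]_(x in `]c, d[) ((Gk k x - G x) ^+ 2)%:E)%E.
have A0 k : (0 <= A k)%E by apply: integral_ge0 => x _; rewrite lee_fin sqr_ge0.
have B0 k : (0 <= B k)%E by apply: integral_ge0 => x _; rewrite lee_fin sqr_ge0.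
have U0 : (0 <= U)%E by apply: integral_ge0 => x _; rewrite lee_fin sqr_ge0.
have V0 : (0 <= V)%E by apply: integral_ge0 => x _; rewrite lee_fin sqr_ge0.
have mX1 : forall a b (H : R -> R), measurable_fun `]a, b[ H ->
    measurable_fun `]a, b[ (fun x => (H x ^+ 2)%:E).
  by move=> ? ? H mH; apply/measurable_EFinP; exact: measurable_funX.
have Bk k : (\int[@leb R]_(y in `]c, d[) (Gk k y ^+ 2)%:E <= 2%:E * B k + 2%:E * V)%E.
  rewrite /B /V -!ge0_integralZl //; last 4 first;
    try (by apply: mX1; try apply: measurable_funB);
    try (by move=> x _; rewrite lee_fin sqr_ge0).
  rewrite -ge0_integralD //; last 4 first.
  - by move=> x _; rewrite mule_ge0 // lee_fin sqr_ge0.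
  - apply: emeasurable_funM; first exact: measurable_cst.
    by apply: mX1; apply: measurable_funB.
  - by move=> x _; rewrite mule_ge0 // lee_fin sqr_ge0.
  - apply: emeasurable_funM; first exact: measurable_cst.
    exact: mX1.
  apply: ge0_le_integral => //.
  - by move=> x _; rewrite lee_fin sqr_ge0.
  - exact: mX1.
  - apply: emeasurable_funD; (apply: emeasurable_funM; first exact: measurable_cst).
      by apply: mX1; apply: measurable_funB.
    exact: mX1.
  move=> x _; rewrite -!EFinM -EFinD lee_fin.
  have := sqr_ge0 (Gk k x - 2 * G x); nra.
have mT : forall (u v : R -> R), measurable_fun `]a, b[ u -> measurable_fun `]c, d[ v ->
    measurable_fun (Om a b c d) (fun p => (u p.1 * v p.2)%:E).
  by move=> u v mu mv; apply/measurable_EFinP; exact: mtens.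
have mOm' := mOm a b c d.
have main k : (\int[@leb2 R]_(p in Om a b c d)
      ((tens (Fk k) (Gk k) p - tens F G p) ^+ 2)%:E <=
    2%:E * A k * (2%:E * B k + 2%:E * V) + 2%:E * U * B k)%E.
  have m1 : measurable_fun `]a, b[ (fun x => (Fk k x - F x) ^+ 2).
    by apply: measurable_funX; apply: measurable_funB.
  have m2 : measurable_fun `]c, d[ (fun x => Gk k x ^+ 2) by apply: measurable_funX.
  have m3 : measurable_fun `]a, b[ (fun x => F x ^+ 2) by apply: measurable_funX.
  have m4 : measurable_fun `]c, d[ (fun x => (Gk k x - G x) ^+ 2).
    by apply: measurable_funX; apply: measurable_funB.
  apply: (@le_trans _ _ (\int[@leb2 R]_(p in Om a b c d)
     (2%:E * ((Fk k p.1 - F p.1) ^+ 2 * Gk k p.2 ^+ 2)%:E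
      + 2%:E * (F p.1 ^+ 2 * (Gk k p.2 - G p.2) ^+ 2)%:E))%E).
    apply: ge0_le_integral => //.
    - by move=> p _; rewrite lee_fin sqr_ge0.
    - apply/measurable_EFinP; apply: measurable_funX; apply: measurable_funB;
        exact: mtens.
    - apply: emeasurable_funD; (apply: emeasurable_funM; first exact: measurable_cst).
        exact: (mT _ _ m1 m2).
      exact: (mT _ _ m3 m4).
    move=> p _; rewrite -!EFinM -EFinD lee_fin /tens.
    set x1 := Fk k p.1 - F p.1; set y1 := Gk k p.2 - G p.2.
    have -> : Fk k p.1 * Gk k p.2 - F p.1 * G p.2 = x1 * Gk k p.2 + F p.1 * y1.
      by rewrite /x1 /y1; ring.
    have := sqr_ge0 (x1 * Gk k p.2 - F p.1 * y1); nra.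
  rewrite ge0_integralD //; last 4 first.
  - by move=> p _; rewrite mule_ge0 // lee_fin mulr_ge0 // sqr_ge0.
  - by apply: emeasurable_funM; [exact: measurable_cst|exact: (mT _ _ m1 m2)].
  - by move=> p _; rewrite mule_ge0 // lee_fin mulr_ge0 // sqr_ge0.
  - by apply: emeasurable_funM; [exact: measurable_cst|exact: (mT _ _ m3 m4)].
  rewrite !ge0_integralZl //; last 4 first;
    try (by move=> p _; rewrite lee_fin mulr_ge0 // sqr_ge0);
    try exact: (mT _ _ m3 m4); try exact: (mT _ _ m1 m2).
  have t1 := tonelli_tens m1 m2 (fun x => sqr_ge0 _) (fun x => sqr_ge0 _).
  have t2 := tonelli_tens m3 m4 (fun x => sqr_ge0 _) (fun x => sqr_ge0 _).
  rewrite /= in t1 t2.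
  rewrite t1 t2.
  rewrite -/(A k) -/(B k) -/U.
  rewrite !muleA.
  apply: leeD2r; apply: lee_pmul => //.
  - by apply: mule_ge0 => //; rewrite lee_fin.
  - by apply: integral_ge0 => y _; rewrite lee_fin sqr_ge0.
have f2 : (2%:E : \bar R) \is a fin_num by [].
have h1 := cvgeZl f2 cF; rewrite mule0 in h1.
have h2' := cvgeZl f2 cG; rewrite mule0 in h2'.
have hc : (fun _ : nat => (2%:E * V)%E) @ \oo --> (2%:E * V)%E by apply: cvg_cst.
have f0 : (0 : \bar R) \is a fin_num by [].
have h2 : (fun k => (2%:E * B k + 2%:E * V)%E) @ \oo --> (2%:E * V)%E.
  rewrite -[X in _ --> X]add0e; apply: cvgeD => //.
have f2V : (2%:E * V)%E \is a fin_num by rewrite fin_numM.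
have h3 : (fun k => (2%:E * A k * (2%:E * B k + 2%:E * V))%E) @ \oo --> 0%E.
  rewrite -[X in _ --> X](mul0e (2%:E * V)%E); apply: cvgeM => //.
  all: try exact: mule_def_fin.
have f2U : (2%:E * U)%E \is a fin_num by rewrite fin_numM.
have h4 := cvgeZl f2U cG; rewrite mule0 in h4.
have h5 : (fun k => (2%:E * A k * (2%:E * B k + 2%:E * V) + 2%:E * U * B k)%E) @ \oo --> 0%E.
  rewrite -[X in _ --> X](adde0 0%E); apply: cvgeD => //.
eapply (@squeeze_cvge _ _ _ _ (fun=> 0%E)); [|exact: cvg_cst|exact: h5].
near=> k; apply/andP; split; last exact: main.
by apply: integral_ge0 => p _; rewrite lee_fin sqr_ge0.
Unshelve. all: by end_near.
Qed.

Lemma cont_tens (f g : R -> R) : continuous f -> continuous g ->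
  continuous (tens f g).
Proof.
move=> cf cg p.
apply: (@continuousM _ _ (f \o fst) (g \o snd)).
  by apply: continuous_comp; [exact: cvg_fst|exact: cf].
by apply: continuous_comp; [exact: cvg_snd|exact: cg].
Qed.

Lemma test2_tens a b c d f g : test1 a b f -> test1 c d g -> test2 a b c d (tens f g).
Proof.
move=> [df [cf [cdf [e1 e10 s1]]]] [dg [cg [cdg [e2 e20 s2]]]].
have ex : dx (tens f g) = tens (derive1 f) g.
  by apply/funext => p; rewrite /dx /tens /= derive1Mr.
have ey : dy (tens f g) = tens f (derive1 g).
  by apply/funext => p; rewrite /dy /tens /= derive1Ml.
split.
  move=> p; have -> : (fun t => tens f g (t, p.2)) = f * cst (g p.2) by [].
  by apply: derivableM => //; exact: derivable_cst.
split.
  move=> p; have -> : (fun t => tens f g (p.1, t)) = cst (f p.1) * g by [].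
  by apply: derivableM => //; exact: derivable_cst.
split; first exact: cont_tens.
split; first by rewrite ex; exact: cont_tens.
split; first by rewrite ey; exact: cont_tens.
have m1 : Num.min e1 e2 <= e1 by rewrite ge_min lexx.
have m2 : Num.min e1 e2 <= e2 by rewrite ge_min lexx orbT.
exists (Num.min e1 e2); first by rewrite lt_min e10.
move=> p hp; rewrite /tens.
case: (boolP (a + Num.min e1 e2 <= p.1 <= b - Num.min e1 e2)) => h1.
  case: (boolP (c + Num.min e1 e2 <= p.2 <= d - Num.min e1 e2)) => h2.
    by exfalso; apply: hp; split.
  rewrite s2 ?mulr0 //; move=> /andP[h3 h4]; move/negP: h2; apply.
  by apply/andP; split; lra.
rewrite s1 ?mul0r //; move=> /andP[h3 h4]; move/negP: h1; apply.
by apply/andP; split; lra.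
Qed.

Lemma dx_tens (f g : R -> R) : (forall x, derivable f x 1) -> dx (tens f g) = tens (derive1 f) g.
Proof. by move=> df; apply/funext => p; rewrite /dx /tens /= derive1Mr. Qed.

Lemma dy_tens (f g : R -> R) : (forall x, derivable g x 1) -> dy (tens f g) = tens f (derive1 g).
Proof. by move=> dg; apply/funext => p; rewrite /dy /tens /= derive1Ml. Qed.

Lemma H10_2_tens a b c d r dr s ds : H10_1 a b r dr -> H10_1 c d s ds ->
  H10_2 a b c d (tens r s) (gtens r dr s ds).
Proof.
move=> [Lr [Ldr [phi [tphi [c1 c2]]]]] [Ls [Lds [psi [tpsi [c3 c4]]]]].
split; first exact: L2_tens.
split; first exact: L2_tens.
split; first exact: L2_tens.
exists (fun k => tens (phi k) (psi k)).
split; first by move=> k; apply: test2_tens.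
split; first by apply: cvg_tens => // k; [apply: mtest1|apply: mtest1].
split.
  have e k : dx (tens (phi k) (psi k)) = tens (derive1 (phi k)) (psi k).
    by apply: dx_tens; case: (tphi k).
  under eq_fun => k do rewrite e.
  by apply: cvg_tens => // k; [apply: mtest1'|apply: mtest1].
have e k : dy (tens (phi k) (psi k)) = tens (phi k) (derive1 (psi k)).
  by apply: dy_tens; case: (tpsi k).
under eq_fun => k do rewrite e.
by apply: cvg_tens => // k; [apply: mtest1|apply: mtest1'].
Qed.

Lemma quart (Phi M : R) : 0 <= M -> (forall t, 0 <= 2 * t ^+ 2 * Phi + t ^+ 4 * M) -> 0 <= Phi.
Proof.
move=> M0 h; rewrite leNgt; apply/negP => Phi0.
pose t := - Phi / (M + 1 - Phi).
have den0 : 0 < M + 1 - Phi by lra.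
have et : t * (M + 1 - Phi) = - Phi by rewrite /t divfK // gt_eqF.
have t0 : 0 < t by rewrite /t divr_gt0 // oppr_gt0.
have t1 : t < 1 by nra.
have := h t.
have t2 : t ^+ 2 <= t by rewrite expr2; nra.
have tM : t ^+ 2 * M <= t * M by nra.
have e4 : t ^+ 4 = t ^+ 2 * t ^+ 2 by rewrite -exprD.
rewrite e4.
have t2p : 0 < t ^+ 2 by rewrite exprn_gt0.
have k : 2 * Phi + t ^+ 2 * M < 0 by nra.
have : t ^+ 2 * (2 * Phi + t ^+ 2 * M) < 0 by rewrite pmulr_rlt0.
move=> k2 k3.
have e : 2 * t ^+ 2 * Phi + t ^+ 2 * t ^+ 2 * M = t ^+ 2 * (2 * Phi + t ^+ 2 * M) by ring.
by rewrite e in k3; rewrite ltNge k3 in k2.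
Qed.

Lemma quad (A B E : R) : 0 <= A -> 0 <= B ->
  (forall l, 0 <= 2^-1 * (l ^+ 2 * A) + 2^-1 * B + l * E) -> E ^+ 2 <= A * B.
Proof.
move=> A0 B0 h.
have [Ap|Az] := ltP 0 A.
  have := h (- E / A).
  have e : (- E / A) ^+ 2 * A = E ^+ 2 / A.
    by field; rewrite gt_eqF.
  rewrite e => h1.
  have h2 : 0 <= B * A - E ^+ 2.
    have : 0 <= (2^-1 * (E ^+ 2 / A) + 2^-1 * B + - E / A * E) * (2 * A) by apply: mulr_ge0 => //; lra.
    have -> : (2^-1 * (E ^+ 2 / A) + 2^-1 * B + - E / A * E) * (2 * A) = B * A - E ^+ 2.
      by field; rewrite gt_eqF.
    by [].
  lra.
have A00 : A = 0 by apply/eqP; rewrite eq_le Az A0.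
have E0 : E = 0.
  apply/eqP; apply/negP => /negP hE.
  have := h (- (2^-1 * B + 1) / E).
  have -> : - (2^-1 * B + 1) / E * E = - (2^-1 * B + 1) by rewrite divfK.
  rewrite A00 mulr0 mulr0 add0r; lra.
by rewrite E0 A00 expr2 !mul0r.
Qed.

Lemma back (A B E : R) : 0 <= A -> 0 <= B -> E ^+ 2 <= A * B ->
  0 <= 2^-1 * A + 2^-1 * B + E.
Proof.
move=> A0 B0 h; rewrite leNgt; apply/negP => hn.
have h1 : 0 <= (A - B) ^+ 2 by apply: sqr_ge0.
nra.
Qed.

End S.

Hint Resolve L2G_add L2G_scale L2G_sub : core.
Ltac dexp :=
  repeat first
   [ rewrite dir_addl; [|by auto..]
   | rewrite dir_addr; [|by auto..]
   | rewrite dir_scalel; [|by auto..]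
   | rewrite dir_scaler; [|by auto..] ].
Section T. Variable R : realType.
Implicit Types a b c d : R.

Lemma H10_1_L2 a b u du : H10_1 a b u du -> L2_1 a b u /\ L2_1 a b du.
Proof. by case=> ? [? _]. Qed.

Lemma phi_ge0 a b c d (f : R * R -> R) (rr drr ss dss : nat -> R -> R) n r dr s ds :
  L2_2 a b c d f ->
  (forall k, (1 <= k)%N -> H10_1 a b (rr k) (drr k) /\ H10_1 c d (ss k) (dss k)) ->
  (1 <= n)%N ->
  (forall r dr s ds, H10_1 a b r dr -> H10_1 c d s ds ->
       Jn a b c d f rr drr ss dss n (rr n) (drr n) (ss n) (dss n)
       <= Jn a b c d f rr drr ss dss n r dr s ds) ->
  H10_1 a b r dr -> H10_1 c d s ds ->
  0 <= 2^-1 * dnorm2 a b c d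
                  (gadd (gtens r dr (ss n) (dss n)) (gtens (rr n) (drr n) s ds))
         + dirichlet a b c d (gtens (rr n) (drr n) (ss n) (dss n)) (gtens r dr s ds)
         - fpair a b c d f rr drr ss dss n.-1 (tens r s) (gtens r dr s ds).
Proof.
move=> Lf hk n1 minn hr hs.
have [hrn hsn] := hk n n1.
have [Lrn Ldrn] := H10_1_L2 hrn; have [Lsn Ldsn] := H10_1_L2 hsn.
have [Lr Ldr] := H10_1_L2 hr; have [Ls Lds] := H10_1_L2 hs.
pose P := gtens (rr n) (drr n) (ss n) (dss n).
pose Y := gadd (gtens r dr (ss n) (dss n)) (gtens (rr n) (drr n) s ds).
pose Z := gtens r dr s ds.
pose v0 := tens (rr n) (ss n).
pose v1 := fun p => tens r (ss n) p + tens (rr n) s p.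
pose v2 := tens r s.
have LP : L2G a b c d P by apply: L2G_gtens.
have LZ : L2G a b c d Z by apply: L2G_gtens.
have LY : L2G a b c d Y by apply: L2G_add; apply: L2G_gtens.
have Lv0 : L2_2 a b c d v0 by apply: L2_tens.
have Lv2 : L2_2 a b c d v2 by apply: L2_tens.
have Lv1 : L2_2 a b c d v1 by apply: L2_2_add; apply: L2_tens.
have Lk : forall k, (1 <= k < n.-1.+1)%N -> L2G a b c d (gtens (rr k) (drr k) (ss k) (dss k)).
  move=> k /andP[k1 _]; have [h1 h2] := hk k k1.
  have [? ?] := H10_1_L2 h1; have [? ?] := H10_1_L2 h2; exact: L2G_gtens.
have key : forall t, Jn a b c d f rr drr ss dss n (fun x => 1 * rr n x + t * r x)
   (fun x => 1 * drr n x + t * dr x) (fun x => 1 * ss n x + t * s x)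
   (fun x => 1 * dss n x + t * ds x) =
   2^-1 * (dnorm2 a b c d P + 2 * t * dirichlet a b c d P Y
      + t ^+ 2 * (dnorm2 a b c d Y + 2 * dirichlet a b c d P Z)
      + 2 * t ^+ 3 * dirichlet a b c d Y Z + t ^+ 4 * dnorm2 a b c d Z)
   - (fpair a b c d f rr drr ss dss n.-1 v0 P + t * fpair a b c d f rr drr ss dss n.-1 v1 Y
      + t ^+ 2 * fpair a b c d f rr drr ss dss n.-1 v2 Z).
  move=> t; rewrite /Jn -dnorm2_poly // -fpair_poly //.
  have -> : gtens (fun x => 1 * rr n x + t * r x) (fun x => 1 * drr n x + t * dr x)
      (fun x => 1 * ss n x + t * s x) (fun x => 1 * dss n x + t * ds x) =
    gadd (gadd P (gscale t Y)) (gscale (t ^+ 2) Z).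
    by congr pair; apply/funext => p; rewrite /= /tens /=; ring.
  have -> : tens (fun x => 1 * rr n x + t * r x) (fun x => 1 * ss n x + t * s x) =
    (fun p => v0 p + t * v1 p + t ^+ 2 * v2 p).
    by apply/funext => p; rewrite /v0 /v1 /v2 /tens /=; ring.
  by [].
have J0 : Jn a b c d f rr drr ss dss n (rr n) (drr n) (ss n) (dss n) =
  2^-1 * dnorm2 a b c d P - fpair a b c d f rr drr ss dss n.-1 v0 P by [].
have h1 := minn _ _ _ _ (H10_1_lin 1 1 hrn hr) (H10_1_lin 1 1 hsn hs).
have h2 := minn _ _ _ _ (H10_1_lin 1 (-1) hrn hr) (H10_1_lin 1 (-1) hsn hs).
apply: (@quart _ _ (dnorm2 a b c d Z)); first exact: dnorm2_ge0.
move=> t.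
have h1t := minn _ _ _ _ (H10_1_lin 1 t hrn hr) (H10_1_lin 1 t hsn hs).
have h2t := minn _ _ _ _ (H10_1_lin 1 (- t) hrn hr) (H10_1_lin 1 (- t) hsn hs).
rewrite key J0 in h1t; rewrite key J0 in h2t.
rewrite -/P -/Y -/Z -/v2.
nra.
Qed.

Lemma phi_eq a b c d (f : R * R -> R) (G : grad R) (rr drr ss dss : nat -> R -> R) n r dr s ds :
  L2_2 a b c d f -> L2G a b c d G ->
  (forall v Gv, H10_2 a b c d v Gv ->
     dirichlet a b c d G Gv = I2 a b c d (fun p => f p * v p)) ->
  (forall k, (1 <= k)%N -> H10_1 a b (rr k) (drr k) /\ H10_1 c d (ss k) (dss k)) ->
  (1 <= n)%N ->
  H10_1 a b r dr -> H10_1 c d s ds ->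
  2^-1 * dnorm2 a b c d
                  (gadd (gtens r dr (ss n) (dss n)) (gtens (rr n) (drr n) s ds))
         + dirichlet a b c d (gtens (rr n) (drr n) (ss n) (dss n)) (gtens r dr s ds)
         - fpair a b c d f rr drr ss dss n.-1 (tens r s) (gtens r dr s ds)
  = 2^-1 * dnorm2 a b c d (gtens r dr (ss n) (dss n))
    + 2^-1 * dnorm2 a b c d (gtens (rr n) (drr n) s ds)
    + dirichlet a b c d
       (gsub (gtens (rr n) (drr n) (ss n) (dss n)) (grad_gn G rr drr ss dss n))
       (gtens r dr s ds).
Proof.
move=> Lf LG weak hk n1 hr hs.
have [hrn hsn] := hk n n1.
have [Lrn Ldrn] := H10_1_L2 hrn; have [Lsn Ldsn] := H10_1_L2 hsn.
have [Lr Ldr] := H10_1_L2 hr; have [Ls Lds] := H10_1_L2 hs.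
pose P := gtens (rr n) (drr n) (ss n) (dss n).
pose Y1 := gtens r dr (ss n) (dss n).
pose Y2 := gtens (rr n) (drr n) s ds.
pose Z := gtens r dr s ds.
have LP : L2G a b c d P by apply: L2G_gtens.
have LZ : L2G a b c d Z by apply: L2G_gtens.
have LY1 : L2G a b c d Y1 by apply: L2G_gtens.
have LY2 : L2G a b c d Y2 by apply: L2G_gtens.
have Lk : forall k, (1 <= k)%N -> L2G a b c d (gtens (rr k) (drr k) (ss k) (dss k)).
  move=> k k1; have [h1 h2] := hk k k1.
  have [? ?] := H10_1_L2 h1; have [? ?] := H10_1_L2 h2; exact: L2G_gtens.
rewrite -/P -/Y1 -/Y2 -/Z.
have ea : dnorm2 a b c d (gadd Y1 Y2) =
    dnorm2 a b c d Y1 + 2 * dirichlet a b c d Y1 Y2 + dnorm2 a b c d Y2.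
  rewrite /dnorm2; dexp; rewrite (dir_sym _ _ _ _ Y2 Y1); ring.
have eb : dirichlet a b c d Y1 Y2 = dirichlet a b c d P Z.
  by apply: I2_ext => p; rewrite /= /tens /=; ring.
have ec : fpair a b c d f rr drr ss dss n.-1 (tens r s) Z =
    dirichlet a b c d G Z
    - \sum_(1 <= k < n) dirichlet a b c d (gtens (rr k) (drr k) (ss k) (dss k)) Z.
  by rewrite /fpair -(weak _ Z) ?prednK //; apply: H10_2_tens.
have ed : dirichlet a b c d (gsub P (grad_gn G rr drr ss dss n)) Z =
    dirichlet a b c d P Z - dirichlet a b c d G Z
    + \sum_(1 <= k < n.+1) dirichlet a b c d (gtens (rr k) (drr k) (ss k) (dss k)) Z.
  rewrite /dirichlet.
  rewrite (@I2_ext R a b c d _ (fun p =>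
      ((P.1 p * Z.1 p + P.2 p * Z.2 p) + (-1) * (G.1 p * Z.1 p + G.2 p * Z.2 p))
      + \sum_(1 <= k < n.+1) ((gtens (rr k) (drr k) (ss k) (dss k)).1 p * Z.1 p
                            + (gtens (rr k) (drr k) (ss k) (dss k)).2 p * Z.2 p))); last first.
    move=> p; rewrite /= big_split /= -!big_distrl /=; ring.
  rewrite I2D; last 2 first.
  - by apply: INT_add; [exact: INT_dir|apply: INT_scale; exact: INT_dir].
  - by apply: INT_sum => k /andP[k1 _]; apply: INT_dir => //; exact: Lk.
  rewrite I2D; last 2 first.
  - exact: INT_dir.
  - by apply: INT_scale; exact: INT_dir.
  rewrite I2Z; last exact: INT_dir.
  rewrite I2_sum; last by move=> k /andP[k1 _]; apply: INT_dir => //; exact: Lk.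
  ring.
rewrite ea eb ec ed big_nat_recr //=.
by rewrite -/P; field.
Qed.

Lemma L2_2_0 a b c d : L2_2 a b c d (fun=> 0).
Proof.
split; first exact: measurable_cst.
have e := @eq_integrable _ _ _ (@leb2 R) _ (mOm a b c d).
apply: (e _ _ _ (@integrable0 _ _ _ (@leb2 R) _)).
by move=> p _; rewrite expr2 mulr0.
Qed.

Lemma L2_2_ext a b c d h1 h2 : h1 =1 h2 -> L2_2 a b c d h1 -> L2_2 a b c d h2.
Proof. by move=> e; rewrite (funext e). Qed.

Lemma L2_2_sum a b c d (h : nat -> R * R -> R) m n :
  (forall k, (m <= k < n)%N -> L2_2 a b c d (h k)) ->
  L2_2 a b c d (fun p => \sum_(m <= k < n) h k p).
Proof.
elim: n => [|n IH] hi.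
  by apply: (L2_2_ext _ (L2_2_0 _ _ _ _)) => p; rewrite big_geq.
case: (leqP m n) => hmn.
  apply: (L2_2_ext (h1 := fun p => \sum_(m <= k < n) h k p + h n p)).
    by move=> p; rewrite big_nat_recr.
  apply: L2_2_add; last by apply: hi; rewrite hmn ltnSn.
  by apply: IH => k /andP[k1 k2]; apply: hi; rewrite k1 ltnS ltnW.
by apply: (L2_2_ext _ (L2_2_0 _ _ _ _)) => p; rewrite big_geq.
Qed.

Lemma L2G_gradgn a b c d (G : grad R) (rr drr ss dss : nat -> R -> R) n :
  L2G a b c d G ->
  (forall k, (1 <= k)%N -> L2G a b c d (gtens (rr k) (drr k) (ss k) (dss k))) ->
  L2G a b c d (grad_gn G rr drr ss dss n).
Proof.
move=> [LG1 LG2] Lk; split.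
- apply: (L2_2_ext (h1 := fun p => G.1 p + (-1) * \sum_(1 <= k < n.+1)
     (gtens (rr k) (drr k) (ss k) (dss k)).1 p)).
    by move=> p; rewrite mulN1r.
  apply: L2_2_add => //; apply: L2_2_scale; apply: L2_2_sum => k /andP[k1 _].
  by case: (Lk k k1).
- apply: (L2_2_ext (h1 := fun p => G.2 p + (-1) * \sum_(1 <= k < n.+1)
     (gtens (rr k) (drr k) (ss k) (dss k)).2 p)).
    by move=> p; rewrite mulN1r.
  apply: L2_2_add => //; apply: L2_2_scale; apply: L2_2_sum => k /andP[k1 _].
  by case: (Lk k k1).
Qed.

Theorem lemma5' (a b c d : R) (f g : R * R -> R) (G : grad R)
  (rr drr ss dss : nat -> R -> R) (n : nat) :
  a < b -> c < d ->
  L2_2 a b c d f ->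
  H10_2 a b c d g G ->
  (forall v Gv, H10_2 a b c d v Gv ->
     dirichlet a b c d G Gv = I2 a b c d (fun p => f p * v p)) ->
  (forall k, (1 <= k)%N ->
     H10_1 a b (rr k) (drr k) /\ H10_1 c d (ss k) (dss k) /\
     forall r dr s ds, H10_1 a b r dr -> H10_1 c d s ds ->
       Jn a b c d f rr drr ss dss k (rr k) (drr k) (ss k) (dss k)
       <= Jn a b c d f rr drr ss dss k r dr s ds) ->
  (1 <= n)%N ->
  let cond1 := forall r dr s ds, H10_1 a b r dr -> H10_1 c d s ds ->
    0 <= 2^-1 * dnorm2 a b c d
                  (gadd (gtens r dr (ss n) (dss n)) (gtens (rr n) (drr n) s ds))
         + dirichlet a b c d (gtens (rr n) (drr n) (ss n) (dss n)) (gtens r dr s ds)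
         - fpair a b c d f rr drr ss dss n.-1 (tens r s) (gtens r dr s ds) in
  let cond2 := forall r dr s ds, H10_1 a b r dr -> H10_1 c d s ds ->
    (dirichlet a b c d
       (gsub (gtens (rr n) (drr n) (ss n) (dss n)) (grad_gn G rr drr ss dss n))
       (gtens r dr s ds)) ^+ 2
    <= dnorm2 a b c d (gtens r dr (ss n) (dss n))
       * dnorm2 a b c d (gtens (rr n) (drr n) s ds) in
  cond1 /\ (cond1 <-> cond2).
Proof.
move=> ab cd Lf hg weak hmin n1 cond1 cond2.
rewrite /cond1 /cond2.
have hk : forall k, (1 <= k)%N -> H10_1 a b (rr k) (drr k) /\ H10_1 c d (ss k) (dss k).
  by move=> k k1; case: (hmin k k1) => [? [? _]]; split.
have minn := (hmin n n1).2.2.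
have LG : L2G a b c d G by case: hg => _ [? [? _]]; split.
have Lk : forall k, (1 <= k)%N -> L2G a b c d (gtens (rr k) (drr k) (ss k) (dss k)).
  move=> k k1; have [h1 h2] := hk k k1.
  have [? ?] := H10_1_L2 h1; have [? ?] := H10_1_L2 h2; exact: L2G_gtens.
have c1 : forall r dr s ds, H10_1 a b r dr -> H10_1 c d s ds ->
    0 <= 2^-1 * dnorm2 a b c d
                  (gadd (gtens r dr (ss n) (dss n)) (gtens (rr n) (drr n) s ds))
         + dirichlet a b c d (gtens (rr n) (drr n) (ss n) (dss n)) (gtens r dr s ds)
         - fpair a b c d f rr drr ss dss n.-1 (tens r s) (gtens r dr s ds).
  by move=> r dr s ds hr hs; exact: phi_ge0.
split => //; split => [_|c2] r dr s ds hr hs; last first.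
  rewrite (phi_eq (G := G)) //; apply: back; try exact: dnorm2_ge0.
  exact: c2.
have [hrn hsn] := hk n n1.
have [Lrn Ldrn] := H10_1_L2 hrn; have [Lsn Ldsn] := H10_1_L2 hsn.
have [Lr Ldr] := H10_1_L2 hr; have [Ls Lds] := H10_1_L2 hs.
have LY1 : L2G a b c d (gtens r dr (ss n) (dss n)) by apply: L2G_gtens.
have LZ : L2G a b c d (gtens r dr s ds) by apply: L2G_gtens.
have LE : L2G a b c d (gsub (gtens (rr n) (drr n) (ss n) (dss n)) (grad_gn G rr drr ss dss n)).
  by apply: L2G_sub; [apply: Lk|apply: L2G_gradgn].
apply: quad; try exact: dnorm2_ge0.
move=> l.
have hlr := H10_1_lin l 0 hr hr.
have := c1 _ _ _ _ hlr hs; rewrite (phi_eq (G := G)) //.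
have -> : gtens (fun x => l * r x + 0 * r x) (fun x => l * dr x + 0 * dr x) (ss n) (dss n)
  = gscale l (gtens r dr (ss n) (dss n)).
  by congr pair; apply/funext => p; rewrite /= /tens /=; ring.
have -> : gtens (fun x => l * r x + 0 * r x) (fun x => l * dr x + 0 * dr x) s ds
  = gscale l (gtens r dr s ds).
  by congr pair; apply/funext => p; rewrite /= /tens /=; ring.
rewrite /dnorm2 dir_scalel ?dir_scaler //; last exact: L2G_scale.
move=> h; apply: (le_trans h); rewrite le_eqVlt; apply/orP; left; apply/eqP.
ring.
Qed.
End T.

Close Scope classical_set_scope.

Theorem lemma5 (R : realType) (a b c d : R) (f g : R * R -> R) (G : grad R)
  (rr drr ss dss : nat -> R -> R) (n : nat) :
  a < b -> c < d ->
  L2_2 a b c d f ->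
  (* g in H^1_0(Omega) is the weak solution of -Delta g = f, g = 0 on the boundary *)
  H10_2 a b c d g G ->
  (forall v Gv, H10_2 a b c d v Gv ->
     dirichlet a b c d G Gv = I2 a b c d (fun p => f p * v p)) ->
  (* Pure Greedy Algorithm: (r_k, s_k) minimizes J_k for every k >= 1 *)
  (forall k, (1 <= k)%N ->
     H10_1 a b (rr k) (drr k) /\ H10_1 c d (ss k) (dss k) /\
     forall r dr s ds, H10_1 a b r dr -> H10_1 c d s ds ->
       Jn a b c d f rr drr ss dss k (rr k) (drr k) (ss k) (dss k)
       <= Jn a b c d f rr drr ss dss k r dr s ds) ->
  (1 <= n)%N ->
  let cond1 := forall r dr s ds, H10_1 a b r dr -> H10_1 c d s ds ->
    0 <= 2^-1 * dnorm2 a b c d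
                  (gadd (gtens r dr (ss n) (dss n)) (gtens (rr n) (drr n) s ds))
         + dirichlet a b c d (gtens (rr n) (drr n) (ss n) (dss n)) (gtens r dr s ds)
         - fpair a b c d f rr drr ss dss n.-1 (tens r s) (gtens r dr s ds) in
  let cond2 := forall r dr s ds, H10_1 a b r dr -> H10_1 c d s ds ->
    (dirichlet a b c d
       (gsub (gtens (rr n) (drr n) (ss n) (dss n)) (grad_gn G rr drr ss dss n))
       (gtens r dr s ds)) ^+ 2
    <= dnorm2 a b c d (gtens r dr (ss n) (dss n))
       * dnorm2 a b c d (gtens (rr n) (drr n) s ds) in
  cond1 /\ (cond1 <-> cond2).
Proof. exact: lemma5'. Qed.
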